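(* In the setting of the context (fix $i\ge 2$), each of the subgroups $E_l$ contains a non-central element of prime order.
   Context: A finite $p$-group $P$ is extra-special if $P'=Z(P)$ has order $p$. For a group $X$ acted on by $Y$, $[X,Y]$ is generated by all $x^{-1}x^{y}$. Construction: let $p_1,p_2,\dots$ be an infinite sequence of primes with $p_{i+1}\ne p_i$ for all $i$. Define finite groups $G_1\le G_2\le\cdots$ and subgroups $R_i\le G_i$ recursively. Let $G_1=R_1$ be cyclic of order $p_1$. For $i\ge2$: let $M_i$ be an extra-special group of order $p_i^3$; let $B$ be the base group of the regular wreath product $M_i\wr G_{i-1}$ (direct product of copies $M_i^{(g)}$, $g\in G_{i-1}$, permuted regularly by $G_{i-1}$); let $B_i=B/[B',G_{i-1}]$ with the induced $G_{i-1}$-action; $D_i=[B_i,R_{i-1}]$; $G_i=D_i\rtimes G_{i-1}$; $R_i=D_i'$. Here $R_{i-1}$ has order $p_{i-1}$ and is central in $G_{i-1}$; $B_i$ is the central product of the images $A_g\cong M_i$ of $M_i^{(g)}$, $g\in G_{i-1}$. Let $O_1,\dots,O_m$ be the orbits of $R_{i-1}$ on the set $\{A_g: g\in G_{i-1}\}$ and $E_l=\big[\prod_{A_g\in O_l}A_g,\,R_{i-1}\big]$ for $l=1,\dots,m$. *)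

(* Defs.v *)
From HB Require Import structures.
From mathcomp Require Import all_boot all_order all_algebra all_fingroup all_solvable.
Set Implicit Arguments. Unset Strict Implicit. Unset Printing Implicit Defensive.

Local Open Scope group_scope.

Definition extra_special (gT : finGroupType) (p : nat) (P : {set gT}) : Prop :=
  [/\ p.-group P, P^`(1) = 'Z(P) & #|'Z(P)| = p].

(* Main.v *)
Require Import Defs.
From HB Require Import structures.
From mathcomp Require Import all_boot all_order all_algebra all_fingroup all_solvable.
Local Open Scope group_scope.

Theorem lemma2p8 (gT : finGroupType) (p q : nat) (W B G M R : {group gT}) :
  prime p -> prime q -> p != q ->
  extra_special p M -> #|M| = (p ^ 3)%N ->
  B ><| G = W ->
  \big[dprod/1]_(g in G) (M :^ g) = B ->
  R \subset 'Z(G) -> #|R| = q ->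
  forall g, g \in G ->
  let N := [~: B^`(1), G] in
  let O := [set ((M :^ g) / N) :^ coset N r | r in R] in
  let E := [~: <<\bigcup_(A in O) A>>, R / N] in
  exists2 x, x \in E & prime #[x] && (x \notin 'Z(E)).
Proof.
move=> pr_p pr_q npq [pgM defM' cardZ] cardM defW defB sRZ cardR g Gg N O E.
have [_ _ nBG tiBG] := sdprodP defW.
pose C h := <<\bigcup_(k | (k \in G) && (k != h)) (M :^ k)>>%G.
have decB h : h \in G -> M :^ h \x C h = B.
  move=> Gh; have := defB; rewrite (bigD1 h Gh) /= => defB'.
  have [[K H defK defH] _ _ _] := dprodP defB'.
  by rewrite /C (bigdprodWY defH) -defH.
have sMB h : h \in G -> M :^ h \subset B.
  by move=> Gh; have [_ <- _ _] := dprodP (decB h Gh); apply: mulG_subl.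
have sCB h : h \in G -> C h \subset B.
  by move=> Gh; have [_ <- _ _] := dprodP (decB h Gh); apply: mulG_subr.
have cMC h : h \in G -> C h \subset 'C(M :^ h).
  by move=> Gh; have [_ _ -> _] := dprodP (decB h Gh).
have tiMC h : h \in G -> M :^ h :&: C h = 1.
  by move=> Gh; have [_ _ _ ->] := dprodP (decB h Gh).
have sMkC h k : k \in G -> k != h -> M :^ k \subset C h.
  move=> Gk nkh.
  have sMU : M :^ k \subset \bigcup_(i | (i \in G) && (i != h)) M :^ i.
    by apply: (bigcup_sup k); rewrite Gk.
  exact: subset_trans sMU (sub_gen _).
have cMM : forall h k, h \in G -> k \in G -> k != h -> M :^ k \subset 'C(M :^ h).
  by move=> h k Gh Gk nkh; apply: subset_trans (cMC h Gh); apply: sMkC.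
pose pi h x := divgr (M :^ h) (C h) x.
have piM h : h \in G -> {in B &, {morph pi h : x y / x * y}}.
  move=> Gh; apply: divgrM; last exact: cMC.
  by apply/complP; have [_ -> _ ->] := dprodP (decB h Gh).
have pi_id h x : x \in M :^ h -> pi h x = x.
  by move=> Mx; apply: divgr_id.
have pi1 h x : h \in G -> x \in C h -> pi h x = 1.
  by move=> Gh Cx; rewrite /pi /divgr remgr_id ?mulgV ?tiMC.
have pi_mem h x : h \in G -> x \in B -> pi h x \in M :^ h.
  by move=> Gh Bx; apply: mem_divgr; have [_ -> _ _] := dprodP (decB h Gh).
have pi_rem h x : h \in G -> x \in B -> exists2 y, y \in C h & x = pi h x * y.
  move=> Gh Bx; exists (remgr (M :^ h) (C h) x); last exact: divgr_eq.
  by apply: mem_remgr; have [_ -> _ _] := dprodP (decB h Gh).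
have sCJ h k : h \in G -> k \in G -> C h :^ k \subset C (h * k).
  move=> Gh Gk; rewrite sub_conjg /C gen_subG; apply/bigcupsP=> i /andP[Gi nih].
  rewrite -sub_conjgV invgK -conjsgM; apply: sMkC; first by rewrite groupM.
  by rewrite (inj_eq (mulIg k)).
have pi_conj h k x : h \in G -> k \in G -> x \in B -> pi (h * k) (x ^ k) = pi h x ^ k.
  move=> Gh Gk Bx; have [y Cy defx] := pi_rem h x Gh Bx.
  rewrite {1}defx conjMg; apply: divgrMid; first by apply: tiMC; rewrite groupM.
    by rewrite /= conjsgM memJ_conjg pi_mem.
  by apply: (subsetP (sCJ h k Gh Gk)); rewrite memJ_conjg.
have sB'B : B^`(1) \subset B := der_sub 1 B.
have pider h x : h \in G -> x \in B^`(1) -> pi h x \in (M :^ h)^`(1).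
  move=> Gh B'x; pose f := Morphism (piM h Gh).
  have sfB : f @* B \subset M :^ h.
    by apply/subsetP=> y /morphimP[z Bz _ ->]; apply: pi_mem.
  have : f x \in f @* B^`(1) by apply: mem_morphim => //; apply: (subsetP sB'B).
  rewrite morphim_der //; apply/subsetP; exact: dergS.
have sM'C : M^`(1) \subset 'C(M) by rewrite defM' subsetIr.
have cB'M h : h \in G -> B^`(1) \subset 'C(M :^ h).
  move=> Gh; apply/subsetP=> w B'w.
  have [y Cy ->] := pi_rem h w Gh (subsetP sB'B w B'w).
  rewrite groupM //; last exact: (subsetP (cMC h Gh)).
  have := pider h w Gh B'w; rewrite derJ /= centJ; by apply: subsetP; rewrite conjSg.
have cB'B : B \subset 'C(B^`(1)).
  rewrite -{1}(bigdprodWY defB) gen_subG; apply/bigcupsP=> h0 Gh0.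
  by rewrite centsC; apply: cB'M.
have nB'G : G \subset 'N(B^`(1)) := char_norm_trans (der_char 1 B) nBG.
have sNB' : N \subset B^`(1) by rewrite /N commg_subl.
have nNG : G \subset 'N(N) := commg_normr G _.
have nNB : B \subset 'N(N).
  by apply: cents_norm; apply: subset_trans cB'B (centS _).
have p_gt1 : 1 < p := prime_gt1 pr_p.
have p_gt0 : 0 < p := prime_gt0 pr_p.
have [z0 defZ0] : exists z0, M^`(1) = <[z0]>.
  by apply/cyclicP; apply: prime_cyclic; rewrite /= defM' cardZ.
have oz0 : #[z0] = p by rewrite orderE -defZ0 defM' cardZ.
pose eps y := index y (mkseq (fun n => z0 ^+ n) p).
have eps_exp n : eps (z0 ^+ n) = n %% p.
  rewrite -expg_mod_order oz0.
  have ltnp : n %% p < p by rewrite ltn_mod.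
  rewrite -(nth_mkseq 1 (fun n => z0 ^+ n) ltnp) /eps index_uniq ?size_mkseq //.
  rewrite /mkseq map_inj_in_uniq ?iota_uniq // => i j.
  rewrite !mem_iota /= !add0n => ltip ltjp /eqP.
  by rewrite eq_expg_mod_order oz0 !modn_small // => /eqP.
have eps_mem y : y \in M^`(1) -> exists n, y = z0 ^+ n.
  by rewrite defZ0 => /cycleP.
have eps_lt y : y \in M^`(1) -> eps y < p.
  by move/eps_mem=> [n ->]; rewrite eps_exp ltn_mod.
have eps_mul y1 y2 : y1 \in M^`(1) -> y2 \in M^`(1) ->
    eps (y1 * y2) = (eps y1 + eps y2) %% p.
  move=> /eps_mem[n1 ->] /eps_mem[n2 ->].
  by rewrite -expgD !eps_exp modnDm.
have eps1 : eps 1 = 0.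
  by rewrite -(expg0 z0) eps_exp mod0n.
have eps0 y : y \in M^`(1) -> eps y = 0 -> y = 1.
  move=> /eps_mem[n ->]; rewrite eps_exp => Hn.
  by rewrite -expg_mod_order oz0 Hn expg0.
pose phi x := (\sum_(h in G) eps (pi h x ^ h^-1)%g) %% p.
have piJ h x : h \in G -> x \in B^`(1) -> pi h x ^ h^-1 \in M^`(1).
  by move=> Gh B'x; rewrite -mem_conjg -derJ; apply: pider.
have modsum (F : gT -> nat) :
    (\sum_(h in G) (F h %% p)) %% p = (\sum_(h in G) F h) %% p.
  elim/big_rec2: _ => // i a b _ IH.
  by rewrite modnDml -modnDmr IH modnDmr.
have phi_mul x y : x \in B^`(1) -> y \in B^`(1) -> phi (x * y) = (phi x + phi y) %% p.
  move=> B'x B'y; rewrite /phi modnDm -big_split /= -[in RHS]modsum.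
  congr (_ %% _); apply: eq_bigr => h Gh.
  rewrite piM ?(subsetP sB'B) // conjMg eps_mul ?piJ //.
have phi_conj : forall x k, x \in B^`(1) -> k \in G -> phi (x ^ k) = phi x.
  move=> x k B'x Gk; rewrite /phi (reindex_inj (mulIg k)) /=.
  congr (_ %% _); apply: eq_big => [h|h]; first by rewrite groupMr.
  rewrite groupMr // => Gh; rewrite pi_conj ?(subsetP sB'B) //.
  by rewrite -conjgM invMg mulKVg.
have phi_z z : z \in (M :^ g)^`(1) -> phi z = eps (z ^ g^-1).
  move=> Mz; have Bz : z \in B^`(1) := subsetP (dergS 1 (sMB g Gg)) z Mz.
  rewrite /phi (bigD1 g Gg) /= big1 => [|h /andP[Gh nhg]].
    rewrite addn0 pi_id ?modn_small ?eps_lt //; first by rewrite -mem_conjg -derJ.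
    exact: (subsetP (der_sub 1 _)).
  rewrite pi1 // ?conj1g ?eps1 //.
  by apply: (subsetP (sMkC h g Gg _)); [rewrite eq_sym | exact: (subsetP (der_sub 1 _))].
have phi1 : phi 1 = 0.
  rewrite /phi big1 ?mod0n // => h Gh.
  by rewrite pi_id ?conj1g ?eps1.
pose K0 := [set x in B^`(1) | phi x == 0].
have gK0 : group_set K0.
  apply/group_setP; split; first by rewrite inE group1 phi1.
  move=> x y; rewrite !inE => /andP[B'x /eqP px] /andP[B'y /eqP py].
  by rewrite groupM // phi_mul // px py add0n mod0n.
have sNK0 : N \subset K0.
  rewrite /N /commutator (gen_subG _ (Group gK0)) /=.
  apply/subsetP=> _ /imset2P[x k B'x Gk ->]; rewrite inE.
  have B'xk : x ^ k \in B^`(1) by rewrite memJ_norm // (subsetP nB'G).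
  rewrite commgEl groupM ?groupV //= phi_mul ?groupV // phi_conj //.
  by rewrite -phi_mul ?groupV // mulVg phi1.
have nabM : ~~ abelian M.
  apply/negP=> /derG1P M'1; move: cardZ; rewrite -defM' M'1 cards1 => p1.
  by move: p_gt1; rewrite -p1.
have nZM : M \subset 'N('Z(M)) := normal_norm (center_normal M).
have cardMZ : #|M / 'Z(M)| = (p ^ 2)%N.
  have := Lagrange (center_sub M); rewrite cardZ cardM -card_quotient //.
  rewrite (_ : (p ^ 3 = p * p ^ 2)%N) ?(expnS p 2) //.
  by move/eqP; rewrite eqn_pmul2l // => /eqP.
have Mp a : a \in M -> a ^+ p \in M^`(1).
  move=> Ma; have Qa : coset 'Z(M) a \in M / 'Z(M) := mem_quotient _ Ma.
  have := order_dvdG Qa; rewrite cardMZ => /(dvdn_pfactor _ _ pr_p)[m le_m2 om].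
  suff : (coset 'Z(M) a) ^+ p = 1.
    rewrite -morphX ?(subsetP nZM) // => /coset_idr; rewrite defM'; apply.
    by rewrite groupX ?(subsetP nZM).
  apply/eqP; rewrite -order_dvdn om.
  case: m le_m2 om => [|[|[|//]]] _ om; rewrite ?expn0 ?dvd1n ?expn1 //.
  case/negP: nabM; apply: cyclic_center_factor_abelian; apply/cyclicP.
  exists (coset 'Z(M) a); apply/eqP; rewrite eq_sym eqEcard cycle_subG Qa /=.
  by rewrite -orderE om cardMZ.
have [a0 Ma0 [b0 Mb0 nab0]] : exists2 a0, a0 \in M &
    exists2 b0, b0 \in M & [~ a0, b0] != 1.
  have [a0 Ma0 nca] := subsetPn nabM; exists a0 => //.
  apply/exists_inP; apply/negP => /exists_inP nH; case/negP: nca.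
  apply/centP=> y My; apply/commgP; apply/negPn/negP => H; apply: nH.
  by exists y.
have sRG : R \subset G := subset_trans sRZ (center_sub G).
have [r Rr nr1] : exists2 r, r \in R & r != 1.
  apply/trivgPn; apply/negP => /eqP R1; move: cardR; rewrite R1 cards1 => q1.
  by move: (prime_gt1 pr_q); rewrite -q1.
have Gr : r \in G := subsetP sRG r Rr.
have or : #[r] = q.
  have := order_dvdG Rr; rewrite cardR.
  have /primeP[_ hq] := pr_q => /hq /pred2P[|//].
  by move/eqP; rewrite order_eq1 (negPf nr1).
have cmk k x y : k \in G -> k != g -> x \in M :^ g -> y \in M :^ k -> commute x y.
  move=> Gk nkg Mx My; have := subsetP (cMM g k Gg Gk nkg) y My.
  by move/centP => /(_ x Mx) cyx; apply: commute_sym.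
pose a := a0 ^ g; pose b := b0 ^ g.
have Ma : a \in M :^ g by rewrite memJ_conjg.
have Mb : b \in M :^ g by rewrite memJ_conjg.
have Mgk x k : x \in M :^ g -> x ^ k \in M :^ (g * k).
  by move=> Mx; rewrite conjsgM memJ_conjg.
have cMg' : (M :^ g)^`(1) \subset 'C(M :^ g).
  by rewrite derJ centJ conjSg.
have sMgB' : (M :^ g)^`(1) \subset B^`(1) := dergS 1 (sMB g Gg).
have wE s : s \in R -> g * s != g ->
    [~ [~ a, r], [~ b, s]] = [~ a^-1, b^-1] * [~ a ^ r, b ^ s].
  move=> Rs ngs; have Gs := subsetP sRG s Rs.
  have ngr : g * r != g by rewrite -{2}(mulg1 g) (inj_eq (mulgI g)).
  have Ggr : g * r \in G by rewrite groupM.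
  have Ggs : g * s \in G by rewrite groupM.
  rewrite (commgEl a r) (commgEl b s).
  set x1 := a^-1; set y1 := a ^ r; set x2 := b^-1; set y2 := b ^ s.
  have Mx1 : x1 \in M :^ g by rewrite groupV.
  have Mx2 : x2 \in M :^ g by rewrite groupV.
  have My1 : y1 \in M :^ (g * r) by apply: Mgk.
  have My2 : y2 \in M :^ (g * s) by apply: Mgk.
  have c11 := cmk _ _ _ Ggr ngr Mx1 My1.
  have c12 := cmk _ _ _ Ggs ngs Mx1 My2.
  have c21 := cmk _ _ _ Ggr ngr Mx2 My1.
  have c22 := cmk _ _ _ Ggs ngs Mx2 My2.
  have e12 : [~ x1, y2] = 1 by apply/eqP/commgP.
  have e21 : [~ y1, x2] = 1 by apply/eqP/commgP; apply: commute_sym.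
  have f11 : x1 ^ y1 = x1 by apply/conjg_fixP/commgP.
  have f12 : x1 ^ y2 = x1 by apply/conjg_fixP/commgP.
  have f21 : x2 ^ y1 = x2 by apply/conjg_fixP/commgP.
  have f22 : x2 ^ y2 = x2 by apply/conjg_fixP/commgP.
  rewrite commMgJ (commgMJ x1 x2 y2) (commgMJ y1 x2 y2) e12 e21 conj1g mul1g mulg1 !conjRg.
  by rewrite f12 f22 f11 f21.
have notN y : phi y != 0 -> y \notin N.
  move=> nz; apply/negP => /(subsetP sNK0); by rewrite inE (negPf nz) andbF.
have cZg x z : x \in M :^ g -> z \in (M :^ g)^`(1) -> commute x z.
  move=> Mx Mz; have /centP := subsetP cMg' z Mz.
  by move/(_ x Mx); apply: commute_sym.
have Mab : [~ a, b] \in (M :^ g)^`(1) by apply: mem_commg.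
have nab : [~ a, b] != 1 by rewrite /a /b -conjRg conjg_eq1.
have ceq : [~ a^-1, b^-1] = [~ a, b].
  rewrite commgV; last by apply: cZg => //; apply: mem_commg; rewrite ?groupV.
  by rewrite commVg ?invgK //; apply: cZg.
have B'ab : [~ a, b] \in B^`(1) := subsetP sMgB' _ Mab.
have phiab : phi [~ a, b] = eps ([~ a, b] ^ g^-1) := phi_z _ Mab.
have Zab : [~ a, b] ^ g^-1 \in M^`(1) by rewrite -mem_conjg -derJ.
have e_lt := eps_lt _ Zab.
have e_nz : eps ([~ a, b] ^ g^-1) != 0.
  apply/eqP => /(eps0 _ Zab) /eqP; rewrite conjg_eq1; exact/negP.
have ngr : g * r != g by rewrite -{2}(mulg1 g) (inj_eq (mulgI g)).
have [s Rs [ngs wN]] : exists2 s, s \in R & g * s != g /\ [~ [~ a, r], [~ b, s]] \notin N.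
  have [p2 | np2] := eqVneq p 2.
    have r2 : r ^+ 2 != 1.
      apply/negP; rewrite -order_dvdn or => /(dvdn_leq (isT : 0 < 2)) q2.
      have q_gt1 := prime_gt1 pr_q.
      have q2' : q = 2 by apply/eqP; rewrite eqn_leq q2 q_gt1.
      by move: npq; rewrite p2 q2'.
    have ngs : g * r ^+ 2 != g by rewrite -{2}(mulg1 g) (inj_eq (mulgI g)).
    have ngs' : g * r ^+ 2 != g * r.
      rewrite (inj_eq (mulgI g)) expgS expg1; apply: contra nr1 => /eqP H.
      by apply/eqP; apply: (mulgI r); rewrite H mulg1.
    exists (r ^+ 2); first by rewrite groupX.
    split=> //; apply: notN; rewrite wE ?groupX //.
    have -> : [~ a ^ r, b ^ r ^+ 2] = 1.
      apply/eqP/commgP.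
      have Gs : g * r ^+ 2 \in G by rewrite groupM ?groupX.
      have Ggr : g * r \in G by rewrite groupM.
      have := subsetP (cMM (g * r) (g * r ^+ 2) Ggr Gs ngs') (b ^ r ^+ 2) (Mgk _ _ Mb).
      by move/centP => /(_ (a ^ r) (Mgk _ _ Ma)); apply: commute_sym.
    by rewrite mulg1 ceq phiab.
  exists r => //; split=> //; apply: notN; rewrite wE // ceq -(conjRg a b r).
  rewrite phi_mul ?memJ_norm ?(subsetP nB'G) // phi_conj // phiab.
  set e := eps _ in e_lt e_nz *.
  apply/negP => /eqP He; have : p %| e + e by apply/eqP.
  rewrite addnn -mul2n Euclid_dvdM // => /orP[/(dvdn_leq (isT : 0 < 2)) p2'|].
    by case/negP: np2; rewrite eqn_leq p2' p_gt1.
  move/(dvdn_leq _); rewrite lt0n e_nz => /(_ isT); rewrite leqNgt e_lt.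
  done.
have Gs : s \in G := subsetP sRG s Rs.
have NB x : x \in B -> x \in 'N(N) := subsetP nNB x.
have NG x : x \in G -> x \in 'N(N) := subsetP nNG x.
have Ba : a \in B := subsetP (sMB g Gg) a Ma.
have Bb : b \in B := subsetP (sMB g Gg) b Mb.
have cR x y : x \in 'N(N) -> y \in 'N(N) ->
    coset N [~ x, y] = [~ coset N x, coset N y].
  by move=> Nx Ny; apply: (morphR (coset_morphism N)).
have Xmem x : x \in M :^ g -> coset N x \in <<\bigcup_(A in O) A>>.
  move=> Mx; apply: mem_gen; apply/bigcupP.
  exists (M :^ g / N); last exact: mem_quotient.
  by apply/imsetP; exists 1; rewrite ?group1 // morph1 conjsg1.
have Emem x y : x \in M :^ g -> y \in R -> coset N [~ x, y] \in E.
  move=> Mx Ry.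
  have Nx : x \in 'N(N) by apply: NB; exact: (subsetP (sMB g Gg)).
  have Ny : y \in 'N(N) by apply: NG; exact: (subsetP sRG).
  rewrite cR //; apply: mem_commg; [exact: Xmem | exact: mem_quotient].
have BarB : [~ a, r] \in B by rewrite groupM ?groupV // memJ_norm // (subsetP nBG).
have BbsB : [~ b, s] \in B by rewrite groupM ?groupV // memJ_norm // (subsetP nBG).
have uE := Emem a r Ma Rr.
have vE := Emem b s Mb Rs.
have uZ : coset N [~ a, r] \notin 'Z(E).
  apply/negP; rewrite inE => /andP[_ /centP /(_ _ vE) /commgP /eqP].
  rewrite -cR ?NB // => /coset_idr H; case/negP: wN; apply: H.
  by apply: NB; rewrite groupR.
have up : coset N [~ a, r] ^+ p = 1.
  rewrite -morphX ?NB //; apply: coset_id.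
  have Ggr : g * r \in G by rewrite groupM.
  have cam : commute a^-1 (a ^ r) by apply: (cmk (g * r)); rewrite ?groupV ?Mgk.
  rewrite (commgEl a r) expgMn // (expgVn a p) -(conjXg a r p) -commgEl.
  apply: mem_commg => //; apply: (subsetP sMgB').
  by rewrite /a -conjXg derJ memJ_conjg Mp.
exists (coset N [~ a, r]) => //; rewrite uZ andbT.
have : #[coset N [~ a, r]] %| p by rewrite order_dvdn up.
have /primeP[_ hp] := pr_p; move/hp => /pred2P[/eqP|-> //].
rewrite order_eq1 => /eqP u1; case/negP: uZ; rewrite u1; exact: group1.
Qed.
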